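(* There is an absolute constant $c$ such that for every graph $G$ with $|V(G)|=2^k$ ($|V(G)|\ge2$) and bijective encoding $\mathrm{enc}:V(G)\to\{0,1\}^k$, $\mathrm{opt}(R[G])\le c\,|V(G)|^2\log|V(G)|$.
   Context: $R[G]=(P,N)$ with $P=\{\mathrm{enc}(u)1\mathrm{enc}(u)^R:u\in V(G)\}$, $N=\{\mathrm{enc}(u)1\mathrm{enc}(v)^R:uv\in E(G)\}$ ($x^R$ = reversal). $\mathrm{opt}(\cdot)$ is the minimum number of states of a canonical DFA consistent with the samples: a DFA over $\{0,1\}$ with possibly partial transition function (undefined runs reject) whose states are partitioned into layers $L_0=\{q_0\},\dots,L_\ell$ with every transition going from some $L_t$ to $L_{t+1}$ and all accepting states in $L_\ell$. *)

(* Defs.v *)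
From mathcomp Require Import all_boot.
Set Implicit Arguments. Unset Strict Implicit. Unset Printing Implicit Defensive.

(* Words over {0,1} are seq bool, with 0 = false and 1 = true. *)

Record LDFA := {
  nst : nat;
  q0 : 'I_nst;
  delta : 'I_nst -> bool -> option 'I_nst;
  acc : pred 'I_nst;
  lay : 'I_nst -> nat;
  depth : nat
}.

Definition canonical (A : LDFA) : Prop :=
  [/\ lay (q0 A) = 0,
      (forall q, lay q = 0 -> q = q0 A),
      (forall q : 'I_(nst A), lay q <= depth A),
      (forall (q : 'I_(nst A)) b q', delta q b = Some q' -> lay q' = (lay q).+1)
    & (forall q : 'I_(nst A), acc q -> lay q = depth A)].

(* run; an undefined transition rejects *)
Definition run (A : LDFA) (w : seq bool) : option 'I_(nst A) :=
  foldl (fun oq b => if oq is Some q then delta q b else None) (Some (q0 A)) w.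

Definition accepts (A : LDFA) (w : seq bool) : bool :=
  if run A w is Some q then acc q else false.

Definition posR (V : Type) (k : nat) (enc : V -> k.-tuple bool) (u : V) : seq bool :=
  enc u ++ true :: rev (enc u).
Definition negR (V : Type) (k : nat) (enc : V -> k.-tuple bool) (u v : V) : seq bool :=
  enc u ++ true :: rev (enc v).

Definition consistent_RG (V : finType) (e : rel V) (k : nat)
    (enc : V -> k.-tuple bool) (A : LDFA) : Prop :=
  (forall u, accepts A (posR enc u)) /\
  (forall u v, e u v -> ~~ accepts A (negR enc u v)).

(* Main.v *)
Require Import Defs.
From mathcomp Require Import all_boot.
From mathcomp Require Import zify.

Definition good (k : nat) (p : nat * nat) : bool :=
  let (t, m) := p in
  if t <= k then m < 2 ^ t else (t <= 2 * k + 1) && (m < 2 ^ (2 * k + 1 - t)).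

Definition step (k : nat) (p : nat * nat) (b : bool) : option (nat * nat) :=
  let (t, m) := p in
  if t < k then Some (t.+1, b + m.*2)
  else if t == k then (if b then Some (t.+1, m) else None)
  else if t < 2 * k + 1 then (if b == odd m then Some (t.+1, m./2) else None)
  else None.

Definition astep k p b := if good k p then step k p b else None.

Definition G k (oq : option (nat * nat)) (b : bool) :=
  if oq is Some q then astep k q b else None.

Lemma good_bound k p : good k p -> p.1 <= 2 * k + 1 /\ p.2 < 2 ^ k.
Proof.
case: p => t m /=; case: ifP => Htk.
  move=> Hm; split; first lia.
  apply: (leq_trans Hm); exact: leq_pexp2l.
move=> /andP [Ht Hm]; split => //.
apply: (leq_trans Hm); apply: leq_pexp2l => //; lia.
Qed.

Lemma astep_good k p b q : astep k p b = Some q -> good k q /\ q.1 = p.1.+1.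
Proof.
rewrite /astep; case Hg: (good k p) => //.
move: Hg; case: p => t m /= Hg.
case: ifP => Htk.
  move=> [<-] /=; split => //.
  have -> : t < k by lia.
  rewrite ifT in Hg; last lia.
  rewrite expnS -muln2; case: b => /=; lia.
case: ifP => /eqP Htk2.
  subst t; case: b => // [[<-]] /=; split => //.
  rewrite ifT in Hg; last lia.
  have -> : (k.+1 <= k) = false by lia.
  have -> : 2 * k + 1 - k.+1 = k by lia.
  rewrite Hg andbT; lia.
case: ifP => // Ht.
case: (b == odd m) => // [[<-]] /=; split => //.
rewrite ifF in Hg; last lia.
move/andP: Hg => [_ Hm].
have -> : (t.+1 <= k) = false by lia.
have -> : t.+1 <= 2 * k + 1 by lia.
have E : 2 * k + 1 - t = (2 * k + 1 - t.+1).+1 by lia.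
rewrite E expnS in Hm.
by rewrite /= ltn_half_double -muln2 mulnC.
Qed.

Arguments astep_good {k p b q}.
Arguments good_bound {k p}.

Lemma foldG_None k w : foldl (G k) None w = None.
Proof. by elim: w. Qed.

Definition numf (m : nat) (b : bool) := b + m.*2.

Lemma phase1 k x : forall t m, good k (t, m) -> t + size x <= k ->
  foldl (G k) (Some (t, m)) x = Some (t + size x, foldl numf m x) /\
  good k (t + size x, foldl numf m x).
Proof.
elim: x => [|b x IH] t m Hg Hs /=; first by rewrite addn0.
rewrite /= in Hs.
have Ha : astep k (t, m) b = Some (t.+1, b + m.*2).
  by rewrite /astep Hg /= ifT //; lia.
have [Hg' _] := astep_good Ha.
rewrite Ha; have := IH _ _ Hg'; rewrite addSnnS; apply; lia.
Qed.

Fixpoint lsbs j m := if j is j'.+1 then odd m :: lsbs j' m./2 else [::].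

Lemma phase2_ok k z : forall t m, good k (t, m) -> k < t -> t + size z = 2 * k + 1 ->
  z = lsbs (size z) m ->
  exists p, foldl (G k) (Some (t, m)) z = Some p /\ good k p /\ p.1 = 2 * k + 1.
Proof.
elim: z => [|b z IH] t m Hg Hkt Hs /=.
  by move=> _; exists (t, m); rewrite addn0 in Hs; subst.
rewrite /= in Hs. move=> [Hb Hz].
have Ha : astep k (t, m) b = Some (t.+1, m./2).
  rewrite /astep Hg /= ifF; last lia.
  rewrite ifF; last (apply/negbTE; lia).
  by rewrite ifT ?Hb ?eqxx //; lia.
have [Hg' _] := astep_good Ha.
rewrite Ha; apply: IH => //; lia.
Qed.

Lemma phase2_bad k z : forall t m, good k (t, m) -> k < t -> t + size z = 2 * k + 1 ->
  z <> lsbs (size z) m -> foldl (G k) (Some (t, m)) z = None.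
Proof.
elim: z => [|b z IH] t m Hg Hkt Hs //=.
move=> Hne. rewrite /= in Hs.
rewrite /astep Hg /= ifF; last lia.
rewrite ifF; last (apply/negbTE; lia).
rewrite ifT; last lia.
case: eqP => Hb; last exact: foldG_None.
have Ha : astep k (t, m) b = Some (t.+1, m./2).
  rewrite /astep Hg /= ifF; last lia.
  rewrite ifF; last (apply/negbTE; lia).
  by rewrite ifT ?Hb ?eqxx //; lia.
have [Hg' _] := astep_good Ha.
apply: (IH _ _ Hg'); [lia|lia|].
by move=> Hz; apply: Hne; rewrite Hb -Hz.
Qed.

Lemma lsbs_num x : lsbs (size x) (foldl numf 0 x) = rev x.
Proof.
elim/last_ind: x => [|x b IH] //.
rewrite foldl_rcons size_rcons rev_rcons /= /numf half_bit_double IH.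
by rewrite oddD odd_double addbF; case: b.
Qed.

Definition NN k := (2 * k + 2) * 2 ^ k.
Lemma NN_gt0 k : 0 < NN k.
Proof. by rewrite /NN muln_gt0 expn_gt0 addn2. Qed.

Definition dec k (i : nat) : nat * nat := (i %/ 2 ^ k, i %% 2 ^ k).
Definition code k (p : nat * nat) : nat := p.1 * 2 ^ k + p.2.
Definition enc_st k (p : nat * nat) : option 'I_(NN k) := insub (code k p).

Lemma dec_code k p : p.2 < 2 ^ k -> dec k (code k p) = p.
Proof.
case: p => t m /= Hm; rewrite /dec /code /= divnMDl ?expn_gt0 //.
by rewrite divn_small // addn0 modnMDl modn_small.
Qed.

Lemma enc_st_good k p : good k p -> exists i, enc_st k p = Some i /\ dec k i = p.
Proof.
move=> Hg; have [H1 H2] := good_bound Hg.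
have Hc : code k p < NN k.
  rewrite /code /NN.
  have : p.1 * 2 ^ k + p.2 < p.1.+1 * 2 ^ k by rewrite mulSn addnC ltn_add2r.
  move=> h; apply: (leq_trans h); rewrite leq_mul2r; apply/orP; right; lia.
exists (Ordinal Hc); split; first by rewrite /enc_st insubT.
by rewrite dec_code.
Qed.

Lemma enc_st_val k p i : enc_st k p = Some i -> val i = code k p.
Proof. by rewrite /enc_st; case: insubP => // u _ <- [<-]. Qed.
Arguments enc_st_val {k p i}.
Arguments enc_st_good {k p}.
Arguments phase1 {k x t m}.
Arguments phase2_ok {k z t m}.
Arguments phase2_bad {k z t m}.

Definition theA (k : nat) : LDFA := {|
  nst := NN k;
  q0 := Ordinal (NN_gt0 k);
  delta := fun i b => obind (enc_st k) (astep k (dec k i) b);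
  acc := fun i => good k (dec k i) && ((dec k i).1 == 2 * k + 1);
  lay := fun i => if good k (dec k i) then (dec k i).1 else 2 * k + 1;
  depth := 2 * k + 1 |}.

Lemma theA_canonical k : canonical (theA k).
Proof.
split; cbn -[good dec leq].
- by rewrite /dec div0n mod0n /=.
- move=> q; case: ifP => Hg H0; last lia; apply: val_inj => /=.
  move: Hg H0; rewrite /dec /= => Hg H0.
  move: Hg; rewrite H0 /= expn0 ltnS leqn0 => /eqP Hm.
  move: (divn_eq q (2 ^ k)); rewrite H0 Hm; lia.
- move=> q; case: ifP => Hg; last lia; exact: (good_bound Hg).1.
- move=> q b q'; case Ha: (astep k (dec k q) b) => [p|] // He.
  have [Hgp Hp1] := astep_good Ha.
  have Hv := enc_st_val He.
  have Hd : dec k q' = p by rewrite Hv dec_code // (good_bound Hgp).2.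
  have Hg : good k (dec k q) by move: Ha; rewrite /astep; case: (good _ _).
  by rewrite Hd Hgp Hg Hp1.
- by move=> q /andP [-> /eqP].
Qed.

Lemma run_sim k w : forall op, (forall p, op = Some p -> good k p) ->
  foldl (fun oq b => if oq is Some q then @delta (theA k) q b else None)
        (obind (enc_st k) op) w = obind (enc_st k) (foldl (G k) op w).
Proof.
elim: w => [|b w IH] op Hop //=.
case: op Hop => [p|] Hop /=; last first.
  by rewrite foldG_None; elim: w {IH} => //.
have [i [-> Hi]] := enc_st_good (Hop p erefl).
rewrite /= Hi; apply: IH => q Hq.
by have [] := astep_good Hq.
Qed.

Lemma enc_st0 k : enc_st k (0, 0) = Some (Ordinal (NN_gt0 k)).
Proof.
have Hg : good k (0, 0) by rewrite /good leq0n expn0.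
have [i [Hi _]] := enc_st_good Hg.
rewrite Hi; congr Some; apply: val_inj => /=.
by rewrite (enc_st_val Hi) /code /= mul0n.
Qed.

Lemma accE k (i : 'I_(NN k)) : @acc (theA k) i = good k (dec k i) && ((dec k i).1 == 2 * k + 1).
Proof. by []. Qed.

Lemma accept_iff k (x y : seq bool) : size x = k -> size y = k ->
  accepts (theA k) (x ++ true :: rev y) = (x == y).
Proof.
move=> Hx Hy.
have Hrun : run (theA k) (x ++ true :: rev y) =
    obind (enc_st k) (foldl (G k) (Some (0, 0)) (x ++ true :: rev y)).
  rewrite /run -run_sim //=; last by move=> p [<-]; rewrite /good leq0n expn0.
  by rewrite enc_st0.
rewrite /accepts Hrun foldl_cat.
have Hg0 : good k (0, 0) by rewrite /good leq0n expn0.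
have Hs : 0 + size x <= k by rewrite add0n Hx.
have [-> Hg1] := phase1 Hg0 Hs.
rewrite add0n Hx in Hg1 *. rewrite [foldl _ _ (_ :: _)]/=.
set m := foldl numf 0 x.
have Ha : astep k (k, m) true = Some (k.+1, m).
  by rewrite /astep Hg1 /= ltnn eqxx.
have [Hg2 _] := astep_good Ha.
rewrite Ha.
have Hsz : k.+1 + size (rev y) = 2 * k + 1 by rewrite size_rev Hy; lia.
have Hl : lsbs k m = rev x by rewrite /m -lsbs_num Hx.
case: (eqVneq x y) => [Exy|Hne].
  have Heq : rev y = lsbs (size (rev y)) m by rewrite size_rev Hy Hl Exy.
  have [p [-> [Hgp Hp]]] := phase2_ok Hg2 (ltnSn k) Hsz Heq.
  have [i [Hi1 Hi]] := enc_st_good Hgp.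
  rewrite [obind _ _]/= Hi1; cbv iota beta; rewrite accE Hi Hgp Hp eqxx //.
rewrite phase2_bad //.
rewrite size_rev Hy Hl => /(congr1 rev); rewrite !revK => E.
by move: Hne; rewrite E eqxx.
Qed.

Theorem mainTheorem8 :
  exists c : nat,
    forall (k : nat) (V : finType) (e : rel V),
      0 < k -> #|V| = 2 ^ k ->
      symmetric e -> irreflexive e ->
      forall enc : V -> k.-tuple bool, bijective enc ->
      exists A : LDFA,
        [/\ canonical A, consistent_RG e enc A
          & nst A <= c * #|V| ^ 2 * k].
Proof.
exists 4 => k V e Hk HV Hsym Hirr enc Hbij.
exists (theA k); split.
- exact: theA_canonical.
- split.
    by move=> u; rewrite /posR accept_iff ?size_tuple ?eqxx.
  move=> u v Huv; rewrite /negR accept_iff ?size_tuple //.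
  apply/negP => /eqP E.
  have E' : enc u = enc v by apply: val_inj.
  move/(bij_inj Hbij): E' => Euv; subst v.
  by rewrite Hirr in Huv.
- rewrite HV /= /NN.
  have : 0 < 2 ^ k by rewrite expn_gt0.
  move: (2 ^ k) => X HX; nia.
Qed.
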